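(* Let $p$ be an odd prime and let $c$ be an integer such that $-c-1$ is a quadratic nonresidue modulo $p$. For every integer $n \ge 1$ define $$q_n = \left\lfloor \frac{(p-1)!\,(n^2 + c)}{p} \right\rfloor.$$ Then for all $n \ge 1$, $q_n$ has a prime factor smaller than $p$, and therefore $q_n$ is composite. *)

(* Defs.v *)
From mathcomp Require Import all_boot all_order all_algebra.
Set Implicit Arguments. Unset Strict Implicit. Unset Printing Implicit Defensive.
Import Order.TTheory GRing.Theory Num.Theory.
Local Open Scope ring_scope.

(* a is a quadratic nonresidue modulo p: a is not congruent to any square
   (in particular a is not divisible by p, since 0 = 0^2). *)
Definition quad_nonresidue (a : int) (p : nat) : Prop :=
  ~ exists x : int, (x ^+ 2 = a %[mod (p%:Z)])%Z.

(* q_n = floor((p-1)! (n^2 + c) / p); divz by a positive divisor is floor division. *)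
Definition qn (p : nat) (c : int) (n : nat) : int :=
  ((((p.-1)`!)%:Z * ((n%:Z) ^+ 2 + c)) %/ (p%:Z))%Z.

(* Main.v *)
Require Import Defs.
From mathcomp Require Import all_boot all_order all_algebra.
From mathcomp Require Import ring lra zify.
Import Order.TTheory GRing.Theory Num.Theory.
Local Open Scope ring_scope.

Theorem theorem12 (p : nat) (c : int) :
  prime p -> odd p -> quad_nonresidue (- c - 1) p ->
  forall n : nat, (1 <= n)%N ->
    (exists2 r : nat, prime r /\ (r < p)%N & (r%:Z %| qn p c n)%Z) /\
    ((p%:Z <= qn p c n) -> ~~ prime `|qn p c n|%N).
Proof.
move=> pp op Hnr n n1.
have p1 : (1 < p)%N by exact: prime_gt1.
have p2 : (2 < p)%N.
  case: p pp op p1 {Hnr} => [|[|[|p']]] //.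
set F := (p.-1)`!.
set N : int := n%:Z ^+ 2 + c.
set Q := qn p c n.
set R := ((F%:Z * N) %% p%:Z)%Z.
have E : F%:Z * N = Q * p%:Z + R by rewrite /Q /qn -divz_eq.
have R0 : 0 <= R by apply: modz_ge0; rewrite eqz_nat; case: (p) p1.
have Rp : R < p%:Z by apply: ltz_pmod; rewrite ltz_nat; case: (p) p1.
have [k Rk] : exists k : nat, R = k%:Z by exists `|R|%N; rewrite gez0_abs.
rewrite Rk ltz_nat in Rp.
have key : forall l : nat, prime l -> (l < p)%N -> (l %| k)%N -> (l%:Z %| Q)%Z.
  move=> l pl lp lk.
  have lF : (l%:Z %| F%:Z * N)%Z.
    apply: dvdz_mulr; rewrite dvdzE /=; apply: dvdn_fact.
    rewrite prime_gt0 //=; case: (p) lp => //.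
  have lQp : (l%:Z %| Q * p%:Z)%Z.
    have -> : Q * p%:Z = F%:Z * N - k%:Z by rewrite E Rk addrK.
    apply: rpredB => //; rewrite dvdzE /=; exact: lk.
  rewrite Gauss_dvdzl // in lQp.
  have -> : coprimez l%:Z p%:Z = coprime l p by [].
  rewrite prime_coprime // dvdn_prime2 //.
  by apply/negP => /eqP Hl; rewrite Hl ltnn in lp.
have [r [pr rp] rQ] : exists2 r : nat, prime r /\ (r < p)%N & (r%:Z %| Q)%Z.
  case: k Rk Rp key => [|[|k]] Rk Rp key.
  - by exists 2%N => //; apply: key.
  - exfalso; apply: Hnr; exists n%:Z; apply/eqP; rewrite eqz_mod_dvd.
    have pF : (p%:Z %| F%:Z + 1)%Z.
      by rewrite -PoszD addn1 dvdzE /= -Wilson.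
    have -> : n%:Z ^+ 2 - (- c - 1) = N * (F%:Z + 1) - Q * p%:Z.
      have : Q * p%:Z = F%:Z * N - 1 by rewrite E Rk addrK.
      move->; rewrite /N; move: (n%:Z ^+ 2) (F%:Z) => a b; nia.
    by apply: rpredB; [apply: dvdz_mull | apply: dvdz_mull; exact: dvdzz].
  - exists (pdiv k.+2); last apply: key.
    + split; first exact: pdiv_prime.
      by apply: leq_ltn_trans Rp; apply: pdiv_leq.
    + exact: pdiv_prime.
    + by apply: leq_ltn_trans Rp; apply: pdiv_leq.
    + exact: pdiv_dvd.
split; first by exists r.
move=> pQ; apply/negP => HQ.
move: rQ; rewrite dvdzE /= dvdn_prime2 // => /eqP Hr.
have : (p%:Z <= `|Q|%N%:Z) by rewrite gez0_abs //; apply: le_trans pQ.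
by rewrite -Hr lez_nat leqNgt rp.
Qed.
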